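(* For every $\alpha\ge1$ there exist reals $0<v_1<\dots<v_n$ and a distribution $\mathcal{D}$ on $\{v_1,\dots,v_n\}$ with full support such that no buyer-optimal signaling scheme for $\mathcal{D}$ is $\alpha$-majorized.
   Context: Values and prior. $v_0:=0$, $f_{\mathcal{D}}$ is the mass function of $\mathcal{D}$, $F_{\mathcal{D}}$ its CDF, and $G_S(p)=\Pr_{v\sim S}[v\ge p]$. Signals and pricing. A signal is a distribution $S$ on $\{v_1,\dots,v_n\}$. The seller posts $p^*_S$, the smallest $v$ in the support of $S$ maximizing $v\,G_S(v)$. The surplus of value $v$ is $cs_v(S)=\mathbb{1}[v\ge p^*_S](v-p^*_S)$. Signaling schemes. A signaling scheme is $\mathcal{Z}=\{(S_q,\gamma_q)\}$ with $\gamma_q\ge0$, $\sum\gamma_q=1$ and $\sum_q\gamma_q f_{S_q}=f_{\mathcal{D}}$. Its expected consumer surplus at $v_i$ is $cs_{v_i}(\mathcal{Z})=\sum_q cs_{v_i}(S_q)\gamma_q f_{S_q}(v_i)/f_{\mathcal{D}}(v_i)$. $\mathcal{Z}$ is buyer-optimal if $\sum_i f_{\mathcal{D}}(v_i)cs_{v_i}(\mathcal{Z})=\sum_i f_{\mathcal{D}}(v_i)v_i-\max_p p\,G_{\mathcal{D}}(p)$. Majorization. The surplus-mass function $s_{\mathcal{Z}}$ on $(0,1]$ equals $cs_{v_i}(\mathcal{Z})$ on $(F_{\mathcal{D}}(v_{i-1}),F_{\mathcal{D}}(v_i)]$. For a finite step function $f$ on $(0,1]$, $\mathrm{Pf}(f,m)=\int_0^m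 f_{\mathrm{sorted}}$, where $f_{\mathrm{sorted}}$ rearranges the steps of $f$ in ascending order. $\mathcal{Z}$ is $\alpha$-majorized if $\alpha\,\mathrm{Pf}(s_{\mathcal{Z}},m)\ge\mathrm{Pf}(s_{\mathcal{Z}'},m)$ for every signaling scheme $\mathcal{Z}'$ for $\mathcal{D}$ and every $m\in(0,1]$. *)

(* Defs.v *)
From HB Require Import structures.
From mathcomp Require Import all_boot all_order all_algebra.
From mathcomp Require Import reals.
Set Implicit Arguments. Unset Strict Implicit. Unset Printing Implicit Defensive.
Import Order.TTheory GRing.Theory Num.Theory.
Local Open Scope ring_scope.

(* Values are v : 'I_n -> R (v i is v_{i+1}); distributions on the values
   are mass functions 'I_n -> R. *)
Section Defs.
Variable R : realType.
Variable n : nat.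

Definition is_distr (S : 'I_n -> R) : Prop :=
  (forall i, 0 <= S i) /\ \sum_i S i = 1.

Definition G (v S : 'I_n -> R) (p : R) : R := \sum_(i | p <= v i) S i.

Definition revenue (v S : 'I_n -> R) (p : R) : R := p * G v S p.

Definition opt_in_support (v S : 'I_n -> R) (j : 'I_n) : bool :=
  (0 < S j) && [forall k, (0 < S k) ==> (revenue v S (v k) <= revenue v S (v j))].

Definition price (v S : 'I_n -> R) : R :=
  if [pick j | opt_in_support v S j &&
               [forall k, opt_in_support v S k ==> (v j <= v k)]] is Some j
  then v j else 0.

Definition cs (v S : 'I_n -> R) (i : 'I_n) : R :=
  if price v S <= v i then v i - price v S else 0.

Record scheme := Scheme {
  nsig : nat;
  sig : 'I_nsig -> 'I_n -> R;
  wt : 'I_nsig -> R }.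
Arguments sig s _ _ : clear implicits.
Arguments wt s _ : clear implicits.

Definition is_scheme (f : 'I_n -> R) (Z : scheme) : Prop :=
  (forall q : 'I_(nsig Z), is_distr (sig Z q)) /\
  (forall q : 'I_(nsig Z), 0 <= wt Z q) /\
  \sum_(q < nsig Z) wt Z q = 1 /\
  (forall i, \sum_(q < nsig Z) wt Z q * sig Z q i = f i).

Definition cs_scheme (v f : 'I_n -> R) (Z : scheme) (i : 'I_n) : R :=
  \sum_(q < nsig Z) cs v (sig Z q) i * wt Z q * sig Z q i / f i.

Definition buyer_optimal (v f : 'I_n -> R) (Z : scheme) : Prop :=
  exists p : R, (forall p' : R, revenue v f p' <= revenue v f p) /\
    \sum_i f i * cs_scheme v f Z i = \sum_i f i * v i - revenue v f p.

(* Pf(g, m) for the step function g on (0,1] with consecutive steps of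
   widths w i and values c i: integral over (0,m] of the ascending
   rearrangement.  The steps are sorted by value; the step at position i of
   the sorted list starts at the total width of the preceding steps. *)
Definition Pf (w c : 'I_n -> R) (m : R) : R :=
  let s := sort (fun i j : 'I_n => c i <= c j) (enum 'I_n) in
  \sum_(i <- s) c i *
     Num.min (Num.max (m - \sum_(j <- take (index i s) s) w j) 0) (w i).

Definition Pf_surplus (v f : 'I_n -> R) (Z : scheme) (m : R) : R :=
  Pf f (cs_scheme v f Z) m.

Definition majorized (alpha : R) (v f : 'I_n -> R) (Z : scheme) : Prop :=
  forall Z' : scheme, is_scheme f Z' ->
  forall m : R, 0 < m <= 1 ->
    Pf_surplus v f Z' m <= alpha * Pf_surplus v f Z m.

End Defs.

(* Main.v *)
Require Import Defs.
From HB Require Import structures.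
From mathcomp Require Import all_boot all_order all_algebra.
From mathcomp Require Import reals.
From mathcomp Require Import ring lra.
Import Order.TTheory GRing.Theory Num.Theory.
Local Open Scope ring_scope.

Set Implicit Arguments. Unset Strict Implicit. Unset Printing Implicit Defensive.

Section S.
Variable R : realType.
Definition o0 : 'I_3 := @Ordinal 3 0 isT.
Definition o1 : 'I_3 := @Ordinal 3 1 isT.
Definition o2 : 'I_3 := @Ordinal 3 2 isT.

Lemma sum3 (F : 'I_3 -> R) : \sum_i F i = F o0 + F o1 + F o2.
Proof.
rewrite !big_ord_recr big_ord0 /= add0r.
by congr (_ + _ + _); congr F; apply: val_inj.
Qed.

Lemma ord3P (P : 'I_3 -> Prop) : P o0 -> P o1 -> P o2 -> forall i, P i.
Proof.
move=> H0 H1 H2 [[|[|[|k]]] Hk].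
- by rewrite (_ : Ordinal Hk = o0) //; apply: val_inj.
- by rewrite (_ : Ordinal Hk = o1) //; apply: val_inj.
- by rewrite (_ : Ordinal Hk = o2) //; apply: val_inj.
- by [].
Qed.

Section V.
Variable v : 'I_3 -> R.
Hypothesis v01 : v o0 < v o1.
Hypothesis v12 : v o1 < v o2.

Lemma G0 S : G v S (v o0) = S o0 + S o1 + S o2.
Proof. rewrite /G big_mkcond sum3 /= lexx (ltW v01) (ltW (lt_trans v01 v12)). by []. Qed.
Lemma G1 S : G v S (v o1) = S o1 + S o2.
Proof. rewrite /G big_mkcond sum3 /= lexx (ltW v12) (lt_geF v01) add0r. by []. Qed.
Lemma G2 S : G v S (v o2) = S o2.
Proof. rewrite /G big_mkcond sum3 /= lexx (lt_geF v12) (lt_geF (lt_trans v01 v12)) !add0r. by []. Qed.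
Lemma distr_supp (S : 'I_3 -> R) : is_distr S -> exists k, 0 < S k.
Proof.
case=> H0 H1; rewrite sum3 in H1.
have := H0 o0; have := H0 o1; have := H0 o2.
rewrite !le0r => /orP[/eqP E2|P2]; last by exists o2.
move=> /orP[/eqP E1|P1]; last by exists o1.
move=> /orP[/eqP E0|P0]; last by exists o0.
by move: H1; rewrite E0 E1 E2 !addr0 => /eqP; rewrite eq_sym oner_eq0.
Qed.

Lemma price_spec (S : 'I_3 -> R) : is_distr S -> exists j,
  [/\ price v S = v j, 0 < S j,
      (forall k, 0 < S k -> revenue v S (v k) <= revenue v S (v j)) &
      (forall k, opt_in_support v S k -> v j <= v k)].
Proof.
move=> HS; rewrite /price; case: pickP => [j /andP [/andP [Pj /forallP Hj] /forallP Hm] | Hn].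
  exists j; split => // k.
  - by move=> Pk; have := Hj k; rewrite Pk.
  - by move=> Ok; have := Hm k; rewrite Ok.
exfalso; have [k Hk] := distr_supp HS.
have Hopt : exists j, opt_in_support v S j.
  case: (@arg_maxP _ _ 'I_3 k (fun i => 0 < S i) (fun i => revenue v S (v i)) Hk) => j Pj Hmax.
  exists j; rewrite /opt_in_support Pj /=; apply/forallP => i; apply/implyP => Pi.
  exact: Hmax.
have v0le : forall i, v o0 <= v i.
  apply: ord3P; [exact: lexx | exact: ltW v01 | exact: ltW (lt_trans v01 v12)].
have v1le : forall i, i != o0 -> v o1 <= v i.
  apply: ord3P => // _; first [exact: lexx | exact: ltW v12].
case: Hopt => j Oj.
case E0: (opt_in_support v S o0).
  have := Hn o0; rewrite E0 /=; move/negP; apply; apply/forallP => i; apply/implyP => _; exact: v0le.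
case E1: (opt_in_support v S o1).
  have := Hn o1; rewrite E1 /=; move/negP; apply; apply/forallP => i; apply/implyP => Oi.
  apply: v1le; apply/eqP => Ei; by rewrite Ei E0 in Oi.
have := Hn o2; move/negP; apply; apply/andP; split.
  move: j Oj; apply: ord3P; by rewrite ?E0 ?E1.
apply/forallP; apply: ord3P; rewrite ?E0 ?E1 /= ?lexx ?implybT //.
Qed.
Lemma cs_ge0 (S : 'I_3 -> R) i : 0 <= cs v S i.
Proof. by rewrite /cs; case: ifP => // H; rewrite subr_ge0. Qed.

Lemma cs0 (S : 'I_3 -> R) : is_distr S -> cs v S o0 = 0.
Proof.
move=> HS; case: (price_spec HS) => j []; move: j; apply: ord3P => Hp _ _ _;
  rewrite /cs Hp ?lexx ?subrr // ?(lt_geF v01) ?(lt_geF (lt_trans v01 v12)) //.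
Qed.

Lemma signal_bound (S : 'I_3 -> R) : is_distr S -> 0 < v o0 ->
  S o1 * cs v S o1 <=
   2 * (S o0 * v o0 + S o1 * v o1 + S o2 * v o2)
   - 2 * (S o0 * cs v S o0 + S o1 * cs v S o1 + S o2 * cs v S o2)
   - v o1 * (S o1 + S o2) - v o2 * S o2
   + v o0 * (v o2 - v o1) / v o2 * S o0.
Proof.
move=> HS a0; have HS' := HS; case: HS' => Hge Hsum; rewrite sum3 in Hsum.
have s0 := Hge o0; have s1 := Hge o1; have s2 := Hge o2.
have v02 := lt_trans v01 v12.
have c0 : 0 < v o2 by apply: lt_trans a0 v02.
have kap : 0 <= v o0 * (v o2 - v o1) / v o2.
  by apply: divr_ge0; [apply: mulr_ge0; [exact: ltW| rewrite subr_ge0; exact: ltW] | exact: ltW].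
case: (price_spec HS) => j []; move: j; apply: ord3P => Hp Sj Hrev _;
  rewrite /cs Hp ?lexx ?subrr ?(ltW v01) ?(ltW v12) ?(ltW v02) ?(lt_geF v01) ?(lt_geF v12) ?(lt_geF v02).
-
  set a := v o0 in a0 kap Hrev *; set b := v o1 in Hrev *; set c := v o2 in c0 Hrev *.
  have g2 : 0 <= a - c * S o2.
    move: s2; rewrite le0r => /orP[/eqP ->|P2]; first by rewrite mulr0 subr0 ltW.
    by have := Hrev o2 P2; rewrite /revenue G0 G2 Hsum mulr1 subr_ge0.
  have g1 : 0 <= a - b * (S o1 + S o2).
    move: s1; rewrite le0r => /orP[/eqP E|P1].
      rewrite E add0r; apply: le_trans g2 _; rewrite lerD2l lerN2; apply: ler_wpM2r => //; exact: ltW.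
    by have := Hrev o1 P1; rewrite /revenue G0 G1 Hsum mulr1 subr_ge0.
  have E0 : S o0 = 1 - S o1 - S o2 by rewrite -Hsum; ring.
  rewrite -subr_ge0.
  have -> : 2 * (S o0 * a + S o1 * b + S o2 * c) - 2 * (S o0 * 0 + S o1 * (b - a) + S o2 * (c - a)) -
       b * (S o1 + S o2) - c * S o2 + a * (c - b) / c * S o0 - S o1 * (b - a)
     = (2 - a / c) * (a - b * (S o1 + S o2)) + (1 + (a - b) / c) * (a - c * S o2).
    rewrite E0; field; exact: lt0r_neq0.
  apply: addr_ge0; apply: mulr_ge0 => //.
  + have -> : 2 - a / c = (2 * c - a) / c by field; exact: lt0r_neq0.
    apply: divr_ge0; last exact: ltW.
    have : a < c by exact: v02.
    have : 0 < c by exact: c0. lra.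
  + have -> : 1 + (a - b) / c = (c + a - b) / c by field; exact: lt0r_neq0.
    apply: divr_ge0; last exact: ltW.
    have : b < c by exact: v12.
    have : 0 < a by exact: a0. lra.
-
  have g : v o2 * S o2 <= v o1 * (S o1 + S o2).
    move: s2; rewrite le0r => /orP[/eqP ->|P2]; first by rewrite !mulr0 addr0; apply: mulr_ge0 => //; exact: ltW (lt_trans a0 v01).
    by have := Hrev o2 P2; rewrite /revenue G1 G2.
  rewrite {1}[S o1 * 0]mulr0.
  have -> : 2 * (S o0 * v o0 + S o1 * v o1 + S o2 * v o2) -
     2 * (S o0 * 0 + S o1 * 0 + S o2 * (v o2 - v o1)) - v o1 * (S o1 + S o2) - v o2 * S o2 +
     v o0 * (v o2 - v o1) / v o2 * S o0
     = 2 * (S o0 * v o0) + (v o1 * (S o1 + S o2) - v o2 * S o2) + v o0 * (v o2 - v o1) / v o2 * S o0.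
    by ring.
  apply: addr_ge0; [apply: addr_ge0|]; [|by rewrite subr_ge0|exact: mulr_ge0].
  by apply: mulr_ge0 => //; apply: mulr_ge0 => //; exact: ltW.
-
  rewrite {1}[S o1 * 0]mulr0.
  have -> : 2 * (S o0 * v o0 + S o1 * v o1 + S o2 * v o2) -
     2 * (S o0 * 0 + S o1 * 0 + S o2 * 0) - v o1 * (S o1 + S o2) - v o2 * S o2 +
     v o0 * (v o2 - v o1) / v o2 * S o0
     = 2 * (S o0 * v o0) + S o1 * v o1 + (v o2 - v o1) * S o2 + v o0 * (v o2 - v o1) / v o2 * S o0.
    by ring.
  have b0 : 0 < v o1 by apply: lt_trans a0 v01.
  have d0 : 0 <= v o2 - v o1 by rewrite subr_ge0; exact: ltW.
  apply: addr_ge0; [apply: addr_ge0; [apply: addr_ge0|]|]; try apply: mulr_ge0 => //; try apply: mulr_ge0 => //; exact: ltW.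
Qed.
End V.
Lemma enum3 : enum 'I_3 = [:: o0; o1; o2].
Proof. by apply: (inj_map val_inj); rewrite val_enum_ord. Qed.

Ltac splitmm :=
  repeat match goal with
  | |- context [Order.max ?x ?y] => case: (leP x y) => ?
  | |- context [Order.min ?x ?y] => case: (leP x y) => ?
  end.

Lemma Pf_U (w c : 'I_3 -> R) : (forall i, 0 <= w i) -> (forall i, 0 <= c i) -> c o0 = 0 ->
  Pf w c (w o0 + w o1) <= w o1 * c o1.
Proof.
move=> Hw Hc C0; rewrite /Pf.
have Hp := perm_sort (fun i j : 'I_3 => c i <= c j) (enum 'I_3).
have Hs := sort_sorted (fun i j : 'I_3 => (le_total (c i) (c j))) (enum 'I_3).
move: Hp Hs; set s := sort _ _ => Hp Hs.
have Hp' : perm_eq s [:: o0; o1; o2] by rewrite Hp enum3.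
clear Hp.
have Hsz : size s = 3%N by rewrite (perm_size Hp').
clearbody s; case: s Hp' Hs Hsz => [|x [|y [|z [|]]]] //= Hp' Hs _.
have w0 := Hw o0; have w1 := Hw o1; have w2 := Hw o2.
have c1 := Hc o1; have c2 := Hc o2.
have m0 : 0 <= w o0 + w o1 by apply: addr_ge0.
clear Hw Hc; move: x y z Hp' Hs; apply: ord3P; apply: ord3P; apply: ord3P => // _;
rewrite ?big_cons ?big_nil /= ?big_cons ?big_nil ?C0 => /andP [Hxy Hyz]; rewrite ?C0 in Hxy Hyz; clear C0;
  rewrite ?mul0r ?add0r ?addr0 ?subr0 ?(elimT max_idPl m0); splitmm;
  rewrite ?mul0r ?add0r ?addr0 ?subr0; try lra; nra.
Qed.

Lemma Pf_L (w c : 'I_3 -> R) g : (forall i, 0 <= w i) -> (forall i, 0 <= c i) -> c o0 = 0 ->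
  w o1 <= w o2 -> 0 <= g -> g <= c o1 -> g <= c o2 -> g * w o1 <= Pf w c (w o0 + w o1).
Proof.
move=> Hw Hc C0 W12 g0 g1 g2; rewrite /Pf.
have Hp := perm_sort (fun i j : 'I_3 => c i <= c j) (enum 'I_3).
have Hs := sort_sorted (fun i j : 'I_3 => (le_total (c i) (c j))) (enum 'I_3).
move: Hp Hs; set s := sort _ _ => Hp Hs.
have Hp' : perm_eq s [:: o0; o1; o2] by rewrite Hp enum3.
clear Hp.
have Hsz : size s = 3%N by rewrite (perm_size Hp').
clearbody s; case: s Hp' Hs Hsz => [|x [|y [|z [|]]]] //= Hp' Hs _.
have w0 := Hw o0; have w1 := Hw o1; have w2 := Hw o2.
have c1 := Hc o1; have c2 := Hc o2.
have m0 : 0 <= w o0 + w o1 by apply: addr_ge0.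
clear Hw Hc; move: x y z Hp' Hs; apply: ord3P; apply: ord3P; apply: ord3P => // _;
rewrite ?big_cons ?big_nil /= ?big_cons ?big_nil ?C0 => /andP [Hxy Hyz]; rewrite ?C0 in Hxy Hyz; clear C0;
  rewrite ?mul0r ?add0r ?addr0 ?subr0 ?(elimT max_idPl m0); splitmm;
  rewrite ?mul0r ?add0r ?addr0 ?subr0; try lra; nra.
Qed.
End S.

Section S.
Variable R : realType.
Section V2.
Variable v : 'I_3 -> R.
Hypothesis v01 : v o0 < v o1.
Hypothesis v12 : v o1 < v o2.
Hypothesis a0 : 0 < v o0.

Lemma cs_scheme_ge0 (f : 'I_3 -> R) (Z : scheme R 3) i :
  (forall i, 0 < f i) -> is_scheme f Z -> 0 <= cs_scheme v f Z i.
Proof.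
move=> Hf [Hd [Hw _]]; apply: sumr_ge0 => q _.
apply: divr_ge0; last exact: ltW.
apply: mulr_ge0; [apply: mulr_ge0|]; [exact: cs_ge0 | exact: Hw | by case: (Hd q)].
Qed.

Lemma cs_scheme0 (f : 'I_3 -> R) (Z : scheme R 3) :
  is_scheme f Z -> cs_scheme v f Z o0 = 0.
Proof.
move=> [Hd _]; apply: big1 => q _; by rewrite (cs0 v01 v12 (Hd q)) !mul0r.
Qed.

Lemma fcs (f : 'I_3 -> R) (Z : scheme R 3) i : 0 < f i ->
  f i * cs_scheme v f Z i = \sum_(q < nsig Z) cs v (sig (s:=Z) q) i * (wt (s:=Z) q * sig (s:=Z) q i).
Proof.
move=> fi; rewrite /cs_scheme mulr_sumr; apply: eq_bigr => q _.
field; exact: lt0r_neq0.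
Qed.

Lemma key (f : 'I_3 -> R) (Z : scheme R 3) :
  (forall i, 0 < f i) -> is_scheme f Z -> buyer_optimal v f Z ->
  (forall p, revenue v f p <= v o1 * (f o1 + f o2)) ->
  (forall p, revenue v f p <= v o2 * f o2) ->
  f o1 * cs_scheme v f Z o1 <= v o0 * (v o2 - v o1) / v o2 * f o0.
Proof.
move=> Hf HZ [p [Hp HT]] R1 R2.
have HZ' := HZ; case: HZ' => [Hd [Hw [Hw1 Hmix]]].
set k := v o0 * (v o2 - v o1) / v o2.
rewrite sum3 !fcs // in HT; rewrite fcs //.
have Hsum : \sum_(q < nsig Z) cs v (sig (s:=Z) q) o1 * (wt (s:=Z) q * sig (s:=Z) q o1) <=
  \sum_(q < nsig Z) (2 * v o0 * (wt (s:=Z) q * sig (s:=Z) q o0) + 2 * v o1 * (wt (s:=Z) q * sig (s:=Z) q o1)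
     + 2 * v o2 * (wt (s:=Z) q * sig (s:=Z) q o2)
     - 2 * (cs v (sig (s:=Z) q) o0 * (wt (s:=Z) q * sig (s:=Z) q o0))
     - 2 * (cs v (sig (s:=Z) q) o1 * (wt (s:=Z) q * sig (s:=Z) q o1))
     - 2 * (cs v (sig (s:=Z) q) o2 * (wt (s:=Z) q * sig (s:=Z) q o2))
     - v o1 * (wt (s:=Z) q * sig (s:=Z) q o1) - v o1 * (wt (s:=Z) q * sig (s:=Z) q o2)
     - v o2 * (wt (s:=Z) q * sig (s:=Z) q o2) + k * (wt (s:=Z) q * sig (s:=Z) q o0)).
  apply: ler_sum => q _.
  have := signal_bound v01 v12 (Hd q) a0; rewrite -/k => H.
  have := ler_wpM2l (Hw q) H.
  move=> H'; rewrite (_ : cs _ _ _ * _ = wt (s:=Z) q * (sig (s:=Z) q o1 * cs v (sig (s:=Z) q) o1)); last by ring.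
  apply: (le_trans H'); rewrite le_eqVlt; apply/orP; left; apply/eqP; ring.
rewrite !big_split /= ?sumrN -!mulr_sumr !Hmix in Hsum.
apply: le_trans Hsum _.
rewrite sum3 in HT.
have rp1 := R1 p; have rp2 := R2 p.
move: HT rp1 rp2.
set T0 := \sum_(q < nsig Z) _; set T1 := \sum_(q < nsig Z) _; set T2 := \sum_(q < nsig Z) _.
set r := revenue v f p => HT rp1 rp2.
have -> : 2 * v o0 * f o0 + 2 * v o1 * f o1 + 2 * v o2 * f o2 - 2 * T0 - 2 * T1 - 2 * T2 -
   v o1 * f o1 - v o1 * f o2 - v o2 * f o2 + k * f o0
   = 2 * (f o0 * v o0 + f o1 * v o1 + f o2 * v o2 - (T0 + T1 + T2)) - v o1 * (f o1 + f o2) - v o2 * f o2 + k * f o0 by ring.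
rewrite HT. lra.
Qed.
Lemma rev_le (f : 'I_3 -> R) M p : (forall i, 0 <= f i) ->
  v o0 * (f o0 + f o1 + f o2) <= M -> v o1 * (f o1 + f o2) <= M -> v o2 * f o2 <= M -> 0 <= M ->
  revenue v f p <= M.
Proof.
move=> Hf H0 H1 H2 M0; rewrite /revenue /G big_mkcond sum3 /=.
have f0 := Hf o0; have f1 := Hf o1; have f2 := Hf o2; clear Hf.
have v02 := lt_trans v01 v12.
case: (lerP p (v o0)) => h0; case: (lerP p (v o1)) => h1; case: (lerP p (v o2)) => h2;
  rewrite ?add0r ?addr0 ?mulr0.
all: try (exfalso; move: v01 v12 h0 h1 h2; clear; move=> ? ? ? ? ?; lra).
all: first [ (apply: (le_trans _ H0); apply: ler_wpM2r; lra) | (apply: (le_trans _ H1); apply: ler_wpM2r; lra) | (apply: (le_trans _ H2); apply: ler_wpM2r; lra) | lra].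
Qed.
End V2.
End S.

Unset Implicit Arguments.

Section Conc.
Variable R : realType.
Variables e d bt : R.
Hypothesis d0 : 0 < d.
Hypothesis d1 : d <= 1/2.
Hypothesis eE : e = d ^+ 2 / 2.
Hypothesis btE : bt = 1/2 - d/4.

Definition vvD : 'I_3 -> R := fun i => nth 0 [:: e; 1; 1 + d] i.
Definition ffD : 'I_3 -> R := fun i =>
  nth 0 [:: (1 - e)/2; e/2 + bt * d/(1+d); bt/(1+d) + d/4] i.
Definition sgD (q i : 'I_3) : R :=
  nth 0 (nth [::] [:: [:: 1 - e; e; 0]; [:: 0; d / (1 + d); 1 / (1 + d)]; [:: 0; 0; 1]] q) i.
Definition wzD (q : 'I_3) : R := nth 0 [:: 1/2; bt; d/4] q.
Definition ZpD := @Scheme R 3 3 sgD wzD.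

Lemma e0 : 0 < e.
Proof. have := d0; have := d1 => ? ?; rewrite eE; apply: divr_gt0; [exact: exprn_gt0 d0 | lra]. Qed.
Lemma e1 : e <= 1/8.
Proof. have := d0; have := d1 => ? ?; rewrite eE; have : d ^+ 2 <= 1/4 by rewrite expr2; apply: le_trans (ler_wpM2r (ltW d0) d1) _; lra. lra. Qed.
Lemma bt0 : 3/8 <= bt.
Proof. have := d0; have := d1 => ? ?; rewrite btE; lra. Qed.
Lemma d1p : 0 < 1 + d.
Proof. have := d0; have := d1 => ? ?; lra. Qed.

Lemma V0 : vvD o0 = e. Proof. have := d0; have := d1 => ? ?; by []. Qed.
Lemma V1 : vvD o1 = 1. Proof. have := d0; have := d1 => ? ?; by []. Qed.
Lemma V2 : vvD o2 = 1 + d. Proof. have := d0; have := d1 => ? ?; by []. Qed.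
Lemma F0 : ffD o0 = (1 - e)/2. Proof. have := d0; have := d1 => ? ?; by []. Qed.
Lemma F1 : ffD o1 = e/2 + bt * d/(1+d). Proof. have := d0; have := d1 => ? ?; by []. Qed.
Lemma F2 : ffD o2 = bt/(1+d) + d/4. Proof. have := d0; have := d1 => ? ?; by []. Qed.
Lemma S00 : sgD o0 o0 = 1 - e. Proof. have := d0; have := d1 => ? ?; by []. Qed.
Lemma S01 : sgD o0 o1 = e. Proof. have := d0; have := d1 => ? ?; by []. Qed.
Lemma S02 : sgD o0 o2 = 0. Proof. have := d0; have := d1 => ? ?; by []. Qed.
Lemma S10 : sgD o1 o0 = 0. Proof. have := d0; have := d1 => ? ?; by []. Qed.
Lemma S11 : sgD o1 o1 = d / (1 + d). Proof. have := d0; have := d1 => ? ?; by []. Qed.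
Lemma S12 : sgD o1 o2 = 1 / (1 + d). Proof. have := d0; have := d1 => ? ?; by []. Qed.
Lemma S20 : sgD o2 o0 = 0. Proof. have := d0; have := d1 => ? ?; by []. Qed.
Lemma S21 : sgD o2 o1 = 0. Proof. have := d0; have := d1 => ? ?; by []. Qed.
Lemma S22 : sgD o2 o2 = 1. Proof. have := d0; have := d1 => ? ?; by []. Qed.
Lemma W0 : wzD o0 = 1/2. Proof. have := d0; have := d1 => ? ?; by []. Qed.
Lemma W1 : wzD o1 = bt. Proof. have := d0; have := d1 => ? ?; by []. Qed.
Lemma W2 : wzD o2 = d/4. Proof. have := d0; have := d1 => ? ?; by []. Qed.
Lemma sigZ q : sig (s:=ZpD) q = sgD q. Proof. have := d0; have := d1 => ? ?; by []. Qed.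
Lemma wtZ q : wt (s:=ZpD) q = wzD q. Proof. have := d0; have := d1 => ? ?; by []. Qed.

Lemma v01 : vvD o0 < vvD o1.
Proof. have := d0; have := d1 => ? ?; rewrite V0 V1; have := e1; lra. Qed.
Lemma v12 : vvD o1 < vvD o2.
Proof. have := d0; have := d1 => ? ?; rewrite V1 V2; lra. Qed.
Lemma vpos : 0 < vvD o0.
Proof. have := d0; have := d1 => ? ?; rewrite V0; exact: e0. Qed.

Lemma btd : 0 < bt * d / (1 + d).
Proof. have := d0; have := d1 => ? ?; have := bt0; have := d1p => ? ?; apply: divr_gt0 => //; apply: mulr_gt0; lra. Qed.
Lemma bt1 : 0 < bt / (1 + d).
Proof. have := d0; have := d1 => ? ?; have := bt0; have := d1p => ? ?; apply: divr_gt0 => //; lra. Qed.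

Lemma Hf i : 0 < ffD i.
Proof. have := d0; have := d1 => ? ?;
have := e0; have := e1; have := btd; have := bt1 => ? ? ? ?.
move: i; apply: ord3P; rewrite ?F0 ?F1 ?F2; lra.
Qed.

Lemma hsum : ffD o0 + ffD o1 + ffD o2 = 1.
Proof. have := d0; have := d1 => ? ?; have := d1p => ?; rewrite F0 F1 F2 btE eE; field; lra. Qed.

Lemma tie : vvD o2 * ffD o2 = vvD o1 * (ffD o1 + ffD o2).
Proof. have := d0; have := d1 => ? ?; have := d1p => ?; rewrite V1 V2 F1 F2 btE eE; field; lra. Qed.

Lemma Rt p : revenue vvD ffD p <= vvD o1 * (ffD o1 + ffD o2).
Proof. have := d0; have := d1 => ? ?;
apply: (rev_le v01 v12) => //.
- move=> i; exact: ltW (Hf i).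
- have := hsum; have := e1 => ? H; rewrite H mulr1 V0 V1 mul1r; move: H; rewrite F0; lra.
- by rewrite tie.
- rewrite V1 mul1r; have := Hf o1; have := Hf o2; lra.
Qed.

Lemma Rt2 p : revenue vvD ffD p <= vvD o2 * ffD o2.
Proof. have := d0; have := d1 => ? ?; by rewrite tie; exact: Rt. Qed.

Lemma HdA : is_distr (sgD o0).
Proof. have := d0; have := d1 => ? ?;
have := e0; have := e1 => ? ?.
split; first by apply: ord3P; rewrite ?S00 ?S01 ?S02; lra.
rewrite sum3 S00 S01 S02; ring.
Qed.
Lemma HdB : is_distr (sgD o1).
Proof. have := d0; have := d1 => ? ?;
have := d1p => ?.
split; first by apply: ord3P; rewrite ?S10 ?S11 ?S12; try lra; apply: divr_ge0; lra.
rewrite sum3 S10 S11 S12; field; lra.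
Qed.
Lemma HdC : is_distr (sgD o2).
Proof. have := d0; have := d1 => ? ?;
split; first by apply: ord3P; rewrite ?S20 ?S21 ?S22; lra.
rewrite sum3 S20 S21 S22; ring.
Qed.

Lemma HZp : is_scheme ffD ZpD.
Proof. have := d0; have := d1 => ? ?;
have := d1p; have := bt0 => ? ?.
split; first by apply: ord3P; rewrite sigZ; [exact: HdA | exact: HdB | exact: HdC].
split; first by apply: ord3P; rewrite wtZ ?W0 ?W1 ?W2; lra.
split; first by rewrite sum3 !wtZ W0 W1 W2 btE; field.
apply: ord3P; rewrite sum3 !wtZ !sigZ W0 W1 W2 ?S00 ?S01 ?S02 ?S10 ?S11 ?S12 ?S20 ?S21 ?S22
  ?F0 ?F1 ?F2 btE; field; lra.
Qed.

Lemma csA : cs vvD (sgD o0) o1 = 1 - e.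
Proof. have := d0; have := d1 => ? ?;
have := e0; have := e1 => ? ?.
have [j [Pj Sj Hrev Hmin]] := price_spec v01 v12 HdA.
move: j Pj Sj Hrev Hmin; apply: ord3P => Pj Sj Hrev Hmin.
- by rewrite /cs Pj V0 V1 ifT //; lra.
- exfalso.
  have O : opt_in_support vvD (sgD o0) o0.
    apply/andP; split; first by rewrite S00; lra.
    apply/forallP; apply: ord3P; apply/implyP => _;
      rewrite /revenue (G0 v01 v12) ?(G1 v01 v12) ?(G2 v01 v12) V0 ?V1 ?V2 S00 S01 S02; lra.
  have := Hmin o0 O; rewrite V0 V1; lra.
- by move: Sj; rewrite S02 ltxx.
Qed.

Lemma csB : cs vvD (sgD o1) o2 = d.
Proof. have := d0; have := d1 => ? ?;
have := d1p => ?.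
have [j [Pj Sj Hrev Hmin]] := price_spec v01 v12 HdB.
move: j Pj Sj Hrev Hmin; apply: ord3P => Pj Sj Hrev Hmin.
- by move: Sj; rewrite S10 ltxx.
- by rewrite /cs Pj V1 V2 ifT; [ring | lra].
- exfalso.
  have O : opt_in_support vvD (sgD o1) o1.
    apply/andP; split; first by rewrite S11; apply: divr_gt0; lra.
    have E1 : (1 + d) * (1 / (1 + d)) = 1 by field; lra.
    have E2 : d / (1 + d) + 1 / (1 + d) = 1 by field; lra.
    apply/forallP; apply: ord3P; apply/implyP; rewrite ?S10 ?ltxx // => _;
      rewrite /revenue ?(G0 v01 v12) ?(G1 v01 v12) ?(G2 v01 v12) ?V0 ?V1 ?V2 ?S10 ?S11 ?S12 ?add0r ?E1 ?E2; lra.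
  have := Hmin o1 O; rewrite V1 V2; lra.
Qed.

Definition L1 : R := (1 - e) * (1/2) * e / ffD o1.
Definition L2 : R := d * bt * (1 / (1 + d)) / ffD o2.

Lemma term_ge0 q i : 0 <= cs vvD (sgD q) i * wzD q * sgD q i / ffD i.
Proof. have := d0; have := d1 => ? ?;
have := bt0 => ?.
apply: divr_ge0; last exact: ltW (Hf i); apply: mulr_ge0; [apply: mulr_ge0|].
- exact: cs_ge0.
- move: q; apply: ord3P; rewrite ?W0 ?W1 ?W2; lra.
- have : is_distr (sgD q) by move: q; apply: ord3P; [exact: HdA | exact: HdB | exact: HdC].
  by case.
Qed.

Lemma HL1 : L1 <= cs_scheme vvD ffD ZpD o1.
Proof. have := d0; have := d1 => ? ?;
rewrite /cs_scheme sum3 !wtZ !sigZ.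
have := term_ge0 o1 o1; have := term_ge0 o2 o1.
rewrite csA W0 S01 /L1 => ? ?; lra.
Qed.

Lemma HL2 : L2 <= cs_scheme vvD ffD ZpD o2.
Proof. have := d0; have := d1 => ? ?;
rewrite /cs_scheme sum3 !wtZ !sigZ.
have := term_ge0 o0 o2; have := term_ge0 o2 o2.
rewrite csB W1 S12 /L2 => ? ?; lra.
Qed.

Lemma w12 : ffD o1 <= ffD o2.
Proof. have := d0; have := d1 => ? ?;
have := d1p => ?.
have -> : ffD o1 = d * ffD o2 by rewrite F1 F2 btE eE; field; lra.
have := Hf o2; nra.
Qed.

Lemma Lmin0 : 0 <= Num.min L1 L2.
Proof. have := d0; have := d1 => ? ?;
have := e0; have := e1; have := bt0; have := d1p => ? ? ? ?.
rewrite le_min; apply/andP; split.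
- rewrite /L1; apply: divr_ge0; last exact: ltW (Hf o1); apply: mulr_ge0; [apply: mulr_ge0|]; lra.
- rewrite /L2; apply: divr_ge0; last exact: ltW (Hf o2); apply: mulr_ge0; [apply: mulr_ge0|]; try lra.
  by rewrite div1r invr_ge0; lra.
Qed.

Lemma final_ineq :
  (2 * d)^-1 * (vvD o0 * (vvD o2 - vvD o1) / vvD o2 * ffD o0) < Num.min L1 L2 * ffD o1.
Proof. have := d0; have := d1 => ? ?;
have := e0; have := e1; have := bt0; have := d1p => ? ? ? ?.
have f1 := Hf o1; have f2 := Hf o2.
have f1E : ffD o1 = d * ffD o2 by rewrite F1 F2 btE eE; field; lra.
have n1 : 1 + d != 0 by apply: lt0r_neq0.
have nd : d != 0 by apply: lt0r_neq0.
have nf1 : ffD o1 != 0 by apply: lt0r_neq0.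
have nf2 : ffD o2 != 0 by apply: lt0r_neq0.
rewrite V0 V1 V2 F0 -subr_gt0.
case: (lerP L1 L2) => _.
- have -> : L1 * ffD o1 - (2 * d)^-1 * (e * (1 + d - 1) / (1 + d) * ((1 - e) / 2))
          = (e * (1 - e)) * (1 + 2 * d) / (4 * (1 + d)).
    by rewrite /L1; field; rewrite ?n1 ?nd ?nf1 ?nf2.
  apply: divr_gt0; last lra; apply: mulr_gt0; last lra; apply: mulr_gt0; lra.
- have -> : L2 * ffD o1 - (2 * d)^-1 * (e * (1 + d - 1) / (1 + d) * ((1 - e) / 2))
          = d ^+ 2 * (bt - (1 - e) / 8) / (1 + d).
    by rewrite /L2 f1E eE; field; rewrite ?n1 ?nd ?nf1 ?nf2.
  apply: divr_gt0; last lra; apply: mulr_gt0; last lra; exact: exprn_gt0.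
Qed.

Lemma conc_main (Z : scheme R 3) : is_scheme ffD Z -> buyer_optimal vvD ffD Z ->
  ~ majorized ((2 * d)^-1) vvD ffD Z.
Proof.
have := d0; have := d1 => ? ?.
move=> HZ HB HM.
have Hkey := key v01 v12 vpos Hf HZ HB Rt Rt2.
have HPZ : Pf_surplus vvD ffD Z (ffD o0 + ffD o1) <= ffD o1 * cs_scheme vvD ffD Z o1.
  rewrite /Pf_surplus; apply: Pf_U.
  - move=> i; exact: ltW (Hf i).
  - move=> i; apply: cs_scheme_ge0; [exact: Hf | exact: HZ].
  - exact: (cs_scheme0 v01 v12 HZ).
have HPZ' : Num.min L1 L2 * ffD o1 <= Pf_surplus vvD ffD ZpD (ffD o0 + ffD o1).
  rewrite /Pf_surplus; apply: Pf_L.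
  - move=> i; exact: ltW (Hf i).
  - move=> i; apply: cs_scheme_ge0; [exact: Hf | exact: HZp].
  - exact: (cs_scheme0 v01 v12 HZp).
  - exact: w12.
  - exact: Lmin0.
  - apply: le_trans HL1; by rewrite ge_min lexx.
  - apply: le_trans HL2; by rewrite ge_min lexx orbT.
have Hm : 0 < ffD o0 + ffD o1 <= 1.
  have := hsum; have := Hf o0; have := Hf o1; have := Hf o2 => ? ? ? ?.
  apply/andP; split; lra.
have H := HM ZpD HZp _ Hm.
have al0 : 0 <= (2 * d)^-1 by rewrite invr_ge0; lra.
have := final_ineq.
have := le_trans HPZ' (le_trans H (ler_wpM2l al0 (le_trans HPZ Hkey))).
move=> A B; have := lt_le_trans B A; by rewrite ltxx.
Qed.

End Conc.

Theorem theorem3 (R : realType) (alpha : R) : 1 <= alpha ->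
  exists (n : nat) (v f : 'I_n -> R),
    (forall i, 0 < v i) /\
    (forall i j : 'I_n, (i < j)%N -> v i < v j) /\
    (forall i, 0 < f i) /\ \sum_i f i = 1 /\
    forall Z : scheme R n, is_scheme f Z -> buyer_optimal v f Z ->
      ~ majorized alpha v f Z.
Proof.
move=> Ha.
pose d : R := (2 * alpha)^-1.
have a0 : 0 < alpha by lra.
have d0 : 0 < d by rewrite /d invr_gt0; lra.
have dm : d * (2 * alpha) = 1 by rewrite /d mulVf //; lra.
have d1 : d <= 1/2 by nra.
have ad : alpha = (2 * d)^-1 by rewrite /d; field; lra.
clearbody d; subst alpha.
pose e : R := d ^+ 2 / 2.
pose bt : R := 1/2 - d/4.
have eE : e = d ^+ 2 / 2 by [].
have btE : bt = 1/2 - d/4 by [].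
exists 3%N, (vvD R e d), (ffD R e d bt); split.
  apply: ord3P; rewrite ?(V0 R e d d0 d1) ?(V1 R e d d0 d1) ?(V2 R e d d0 d1); [exact: (e0 R e d d0 d1 eE) | lra | lra].
have w01 := v01 R e d d0 d1 eE; have w12 := v12 R e d d0 d1.
split.
  apply: ord3P; apply: ord3P => //= _; first [exact: w01 | exact: w12 | exact: lt_trans w01 w12].
split; first exact: Hf R e d bt d0 d1 eE btE.
split; first by rewrite sum3; exact: hsum R e d bt d0 d1 eE btE.
move=> Z; exact: conc_main R e d bt d0 d1 eE btE Z.
Qed.
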